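(* Let $x,y\ge 0$, not both zero, and $z>0$ (the approximation is intended for the regime $x,y\ll z$). Let $a=(x+y)/2$ and $g=\sqrt{xy}$. Then $$R_D(x,y,z)=\frac{3}{2z^{3/2}}\left(\ln\frac{8z}{a+g}-2+\frac{\theta}{z}\ln\frac{2z}{a+g}\right),$$ where $\frac{g}{1-g/z}<\theta<\frac{3a}{2(1-a/z)}$.
   Context: For $x,y\ge0$ not both zero and $z>0$: $R_D(x,y,z)=\frac32\int_0^\infty[(t+x)(t+y)]^{-1/2}(t+z)^{-3/2}\,dt$. *)

(* Defs.v *)
From Stdlib Require Import Reals.
From Coquelicot Require Import Coquelicot.
Open Scope R_scope.

Definition RD_integrand (x y z t : R) : R :=
  / sqrt ((t + x) * (t + y)) * Rpower (t + z) (- (3 / 2)).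

(* Carlson's R_D(x,y,z) = 3/2 * int_0^oo integrand dt (improper at both ends:
   at_right 0 handles the integrable t^{-1/2} singularity when x or y is 0). *)
Definition R_D (x y z : R) : R :=
  3 / 2 * RInt_gen (RD_integrand x y z) (at_right 0) (Rbar_locally p_infty).

(* Main.v *)
Require Import Defs.
From Stdlib Require Import Reals Lra Psatz.
From Coquelicot Require Import Coquelicot.
Open Scope R_scope.

Ltac nz := match goal with
  | |- _ * _ <> 0 => apply Rmult_integral_contrapositive_currified; nz
  | |- _ => (apply Rgt_not_eq; lra) || (apply Rlt_not_eq; lra) || (let H := fresh in intro H; nra)
  end.
Ltac side := repeat split; try lra; try nz; try (apply Rmult_lt_0_compat; lra).

Lemma cont_of_derive (F dF : R -> R) t : is_derive F t (dF t) -> continuity_pt F t.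
Proof.
  intro H. apply continuity_pt_filterlim. apply (ex_derive_continuous (K:=R_AbsRing) (V:=R_NormedModule)).
  exists (dF t). exact H.
Qed.

Lemma mono_le (F dF : R -> R) u v : u <= v ->
  (forall t, u <= t <= v -> is_derive F t (dF t)) ->
  (forall t, u <= t <= v -> 0 <= dF t) -> F u <= F v.
Proof.
  intros Huv HD Hpos.
  destruct (MVT_gen F u v dF) as [c [Hc Heq]].
  - intros t Ht. rewrite Rmin_left in Ht by lra. rewrite Rmax_right in Ht by lra.
    apply HD; lra.
  - intros t Ht. rewrite Rmin_left in Ht by lra. rewrite Rmax_right in Ht by lra.
    apply (cont_of_derive F dF). apply HD; lra.
  - rewrite Rmin_left in Hc by lra. rewrite Rmax_right in Hc by lra.
    assert (0 <= dF c) by (apply Hpos; lra).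
    assert (0 <= dF c * (v - u)) by (apply Rmult_le_pos; lra). lra.
Qed.

Lemma mono_lt (F dF : R -> R) u v : u < v ->
  (forall t, u <= t <= v -> is_derive F t (dF t)) ->
  (forall t, u <= t <= v -> 0 <= dF t) ->
  (forall t, u < t <= v -> 0 < dF t) -> F u < F v.
Proof.
  intros Huv HD Hpos Hspos.
  set (m := (u + v) / 2).
  assert (F u <= F m).
  { apply (mono_le F dF); unfold m in *; try lra; intros; [apply HD|apply Hpos]; lra. }
  destruct (MVT_gen F m v dF) as [c [Hc Heq]].
  - intros t Ht. unfold m in *. rewrite Rmin_left in Ht by lra. rewrite Rmax_right in Ht by lra.
    apply HD; lra.
  - intros t Ht. unfold m in *. rewrite Rmin_left in Ht by lra. rewrite Rmax_right in Ht by lra.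
    apply (cont_of_derive F dF). apply HD; lra.
  - unfold m in *. rewrite Rmin_left in Hc by lra. rewrite Rmax_right in Hc by lra.
    assert (0 < dF c) by (apply Hspos; lra).
    assert (0 < dF c * (v - (u+v)/2)) by (apply Rmult_lt_0_compat; lra). lra.
Qed.

Lemma ln_le_xm1 x : 0 < x -> ln x <= x - 1.
Proof.
  intro Hx. rewrite <- (exp_ln x) at 2 by exact Hx.
  pose proof (exp_ineq1_le (ln x)). lra.
Qed.

Lemma ln_ineq1 s : 0 < s -> ln (1 + s) > (3*s + s^2/2 - s^4/3) / (3 + 2*s).
Proof.
  intro Hs.
  set (F := fun t => ln (1 + t) - (3*t + t^2/2 - t^4/3) / (3 + 2*t)).
  set (dF := fun t => (3*t^3 + 6*t^4 + 2*t^5) / ((1+t) * (3+2*t)^2)).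
  assert (HD : forall t, 0 <= t -> is_derive F t (dF t)).
  { intros t Ht. unfold F, dF. auto_derive.
    - repeat split; lra.
    - field. split; lra. }
  assert (F 0 < F s).
  { apply (mono_lt F dF); try lra.
    - intros t Ht; apply HD; lra.
    - intros t Ht. unfold dF. apply Rdiv_le_0_compat.
      + assert (0 <= t^3) by (apply pow_le; lra).
        assert (0 <= t^4) by (apply pow_le; lra).
        assert (0 <= t^5) by (apply pow_le; lra). lra.
      + apply Rmult_lt_0_compat; [lra|]. apply pow_lt; lra.
    - intros t Ht. unfold dF. apply Rdiv_lt_0_compat.
      + assert (0 < t^3) by (apply pow_lt; lra).
        assert (0 <= t^4) by (apply pow_le; lra).
        assert (0 <= t^5) by (apply pow_le; lra). lra.
      + apply Rmult_lt_0_compat; [lra|]. apply pow_lt; lra. }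
  unfold F in H. rewrite Rplus_0_r, ln_1 in H. 
  replace ((3 * 0 + 0 ^ 2 / 2 - 0 ^ 4 / 3) / (3 + 2 * 0)) with 0 in H by field. lra.
Qed.

Lemma ln_ineq2 r : 0 < r -> 12 * ln (1 + r) < 12*r - (6*r^2 + 8*r^3)/(1+r)^2.
Proof.
  intro Hr.
  set (F := fun t => 12*t - (6*t^2 + 8*t^3)/(1+t)^2 - 12 * ln (1 + t)).
  set (dF := fun t => 4*t^3/(1+t)^3).
  assert (HD : forall t, 0 <= t -> is_derive F t (dF t)).
  { intros t Ht. unfold F, dF. auto_derive.
    - side.
    - field. lra. }
  assert (F 0 < F r).
  { apply (mono_lt F dF); try lra.
    - intros t Ht; apply HD; lra.
    - intros t Ht. unfold dF. apply Rdiv_le_0_compat.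
      + assert (0 <= t^3) by (apply pow_le; lra). lra.
      + apply pow_lt; lra.
    - intros t Ht. unfold dF. apply Rdiv_lt_0_compat.
      + assert (0 < t^3) by (apply pow_lt; lra). lra.
      + apply pow_lt; lra. }
  unfold F in H. rewrite Rplus_0_r, ln_1 in H.
  replace (12 * 0 - (6 * 0 ^ 2 + 8 * 0 ^ 3) / (1 + 0) ^ 2 - 12 * 0) with 0 in H by field. lra.
Qed.

Lemma ln_ineq3 s : 0 <= s < 1 -> - ln (1 - s) >= s + s^2/2 + s^3/3.
Proof.
  intro Hs.
  set (F := fun t => - ln (1 - t) - t - t^2/2 - t^3/3).
  set (dF := fun t => t^3/(1-t)).
  assert (HD : forall t, 0 <= t < 1 -> is_derive F t (dF t)).
  { intros t Ht. unfold F, dF. auto_derive.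
    - lra.
    - field. lra. }
  assert (F 0 <= F s).
  { apply (mono_le F dF); try lra.
    - intros t Ht; apply HD; lra.
    - intros t Ht. unfold dF. apply Rdiv_le_0_compat.
      + apply pow_le; lra.
      + lra. }
  unfold F in H. replace (1 - 0) with 1 in H by ring. rewrite ln_1 in H. lra.
Qed.

Lemma ln_ineq4 r : 0 < r < 1 -> ln (1 + r) - ln (1 - r) > 2 * r.
Proof.
  intro Hr.
  set (F := fun t => ln (1 + t) - ln (1 - t) - 2 * t).
  set (dF := fun t => 2 * t^2/(1 - t^2)).
  assert (HD : forall t, 0 <= t < 1 -> is_derive F t (dF t)).
  { intros t Ht. unfold F, dF. auto_derive.
    - side.
    - field. split; try lra. nra. }
  assert (F 0 < F r).
  { apply (mono_lt F dF); try lra.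
    - intros t Ht; apply HD; lra.
    - intros t Ht. unfold dF. apply Rdiv_le_0_compat.
      + assert (0 <= t^2) by (apply pow_le; lra). lra.
      + nra.
    - intros t Ht. unfold dF. apply Rdiv_lt_0_compat.
      + assert (0 < t^2) by (apply pow_lt; lra). lra.
      + nra. }
  unfold F in H. replace (1 - 0) with 1 in H by ring. replace (1 + 0) with 1 in H by ring. rewrite ln_1 in H. lra.
Qed.

Lemma k1_ineq s : 0 < s < 1 ->
  - s - s^2/2 - s^3/6 - s^4/3 + (1+s) * ln (1+s) > (2 * ln 2 - 2) * s^3.
Proof.
  intro Hs.
  set (k := fun t => (- t - t^2/2 - t^3/6 - t^4/3 + (1+t) * ln (1+t)) / t^3).
  set (F := fun t => - k t).
  set (dF := fun t => - (3*t + t^2/2 - t^4/3 - (3 + 2*t) * ln (1 + t)) / t^4).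
  assert (HD : forall t, 0 < t -> is_derive F t (dF t)).
  { intros t Ht. unfold F, k, dF. auto_derive.
    - side.
    - field. lra. }
  assert (Hpos : forall t, 0 < t -> 0 < dF t).
  { intros t Ht. unfold dF. apply Rdiv_lt_0_compat; [|apply pow_lt; lra].
    pose proof (ln_ineq1 t Ht).
    apply Rmult_gt_compat_l with (r := 3 + 2*t) in H; [|lra].
    replace ((3 + 2 * t) * ((3 * t + t ^ 2 / 2 - t ^ 4 / 3) / (3 + 2 * t))) with
      (3 * t + t ^ 2 / 2 - t ^ 4 / 3) in H by (field; lra). lra. }
  assert (F s < F 1).
  { apply (mono_lt F dF); try lra.
    - intros t Ht; apply HD; lra.
    - intros t Ht. left. apply Hpos; lra.
    - intros t Ht. apply Hpos; lra. }
  unfold F, k in H.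
  replace (1 + 1) with 2 in H by ring.
  replace ((- (1) - 1 ^ 2 / 2 - 1 ^ 3 / 6 - 1 ^ 4 / 3 + 2 * ln 2) / 1 ^ 3)
    with (2 * ln 2 - 2) in H by field.
  assert (Hs3 : 0 < s^3) by (apply pow_lt; lra).
  assert (E : (- s - s ^ 2 / 2 - s ^ 3 / 6 - s ^ 4 / 3 + (1 + s) * ln (1 + s)) =
     ((- s - s ^ 2 / 2 - s ^ 3 / 6 - s ^ 4 / 3 + (1 + s) * ln (1 + s)) / s ^ 3) * s^3)
    by (field; lra).
  rewrite E. apply Rmult_gt_compat_r; [exact Hs3|]. lra.
Qed.

Lemma k2_ineq r : 0 < r < 1 ->
  4*r - 4 * ln (1+r) - (1-r)*(2+r)*r^2/(1+r) > (4 - 4 * ln 2) * r^3.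
Proof.
  intro Hr.
  set (k := fun t => (4*t - 4 * ln (1+t) - (1-t)*(2+t)*t^2/(1+t)) / t^3).
  set (F := fun t => - k t).
  set (dF := fun t => (12*t - (6*t^2 + 8*t^3)/(1+t)^2 - 12 * ln (1 + t)) / t^4).
  assert (HD : forall t, 0 < t -> is_derive F t (dF t)).
  { intros t Ht. unfold F, k, dF. auto_derive.
    - side.
    - field. lra. }
  assert (Hpos : forall t, 0 < t -> 0 < dF t).
  { intros t Ht. unfold dF. apply Rdiv_lt_0_compat; [|apply pow_lt; lra].
    pose proof (ln_ineq2 t Ht). lra. }
  assert (F r < F 1).
  { apply (mono_lt F dF); try lra.
    - intros t Ht; apply HD; lra.
    - intros t Ht. left. apply Hpos; lra.
    - intros t Ht. apply Hpos; lra. }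
  unfold F, k in H.
  replace (1 + 1) with 2 in H by ring.
  replace ((4 * 1 - 4 * ln 2 - (1 - 1) * (2 + 1) * 1 ^ 2 / 2) / 1 ^ 3)
    with (4 - 4 * ln 2) in H by field.
  assert (Hs3 : 0 < r^3) by (apply pow_lt; lra).
  set (N := 4 * r - 4 * ln (1 + r) - (1 - r) * (2 + r) * r ^ 2 / (1 + r)) in *.
  assert (E : N = (N / r^3) * r^3) by (field; lra).
  rewrite E. apply Rmult_gt_compat_r; [exact Hs3|]. lra.
Qed.

Definition Sf x y t := sqrt ((t + x) * (t + y)).
Definition sig x y t := t + (x + y) / 2 + Sf x y t.
Definition Wf x y c t := sqrt (sig x y t + c * c).
Definition Kf c w := 2 / (c * c) * (ln ((w - c) / (w + c)) / (2 * c) + / w).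
Definition Hf x y c t := 2 * sqrt 2 * Kf c (Wf x y c t).
Definition hf x y c t := 2 * sqrt 2 / (Sf x y t * (Wf x y c t)^3).

Section Geo.
Set Default Proof Using "All".
Variables x y : R.
Hypothesis Hx : 0 <= x.
Hypothesis Hy : 0 <= y.
Hypothesis Hxy : 0 < x + y.

Lemma Sf_pos t : 0 < t -> 0 < Sf x y t.
Proof. intro Ht. unfold Sf. apply sqrt_lt_R0. nra. Qed.

Lemma Sf_sq t : 0 <= t -> Sf x y t * Sf x y t = (t + x) * (t + y).
Proof. intro Ht. unfold Sf. apply sqrt_sqrt. nra. Qed.

Lemma g_sq : sqrt (x * y) * sqrt (x * y) = x * y.
Proof. apply sqrt_sqrt. nra. Qed.

Lemma g_nn : 0 <= sqrt (x * y).
Proof. apply sqrt_pos. Qed.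

Lemma g_le_a : sqrt (x * y) <= (x + y) / 2.
Proof.
  rewrite <- (sqrt_square ((x+y)/2)) by lra.
  apply sqrt_le_1_alt. pose proof (Rle_0_sqr (x-y)) as Hq. unfold Rsqr in Hq. lra.
Qed.

Lemma Sf_ge_g t : 0 <= t -> sqrt (x * y) <= Sf x y t.
Proof.
  intro Ht. unfold Sf. apply sqrt_le_1_alt. nra.
Qed.

Lemma sig_ge t : 0 <= t -> (x + y) / 2 + sqrt (x * y) + t <= sig x y t.
Proof. intro Ht. unfold sig. pose proof (Sf_ge_g t Ht). lra. Qed.

Lemma sig0 : sig x y 0 = (x + y) / 2 + sqrt (x * y).
Proof. unfold sig, Sf. rewrite !Rplus_0_l. ring. Qed.

Lemma sig_identity t z : 0 <= t ->
  2 * sig x y t * (t + z) =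
  sig x y t * sig x y t + 2 * (z - (x+y)/2) * sig x y t
    + (((x+y)/2)^2 - sqrt (x*y) * sqrt (x*y)).
Proof.
  intro Ht. rewrite g_sq. unfold sig.
  pose proof (Sf_sq t Ht). nra.
Qed.

Lemma tz_bounds t z : 0 <= t ->
  (sig x y t + (2*z - 2*((x+y)/2))) / 2 <= t + z <=
  (sig x y t + (2*z - ((x+y)/2 + sqrt (x*y)))) / 2.
Proof.
  intro Ht.
  pose proof (sig_identity t z Ht) as E.
  pose proof (sig_ge t Ht) as Hs.
  pose proof g_le_a. pose proof g_nn.
  set (s := sig x y t) in *. set (g := sqrt (x*y)) in *. set (a := (x+y)/2) in *.
  assert (0 < a) by (unfold a; lra).
  assert (Hspos : 0 < s) by lra.
  assert (Hq1 : 0 <= (a - g) * (a + g)) by (apply Rmult_le_pos; lra).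
  assert (Hq2 : (a - g) * (a + g) <= (a - g) * s) by (apply Rmult_le_compat_l; lra).
  assert (a ^ 2 - g * g = (a - g) * (a + g)) by ring.
  split.
  - apply Rmult_le_reg_l with (r := 2 * s); [lra|].
    replace (2 * s * ((s + (2 * z - 2 * a)) / 2)) with (s * s + 2 * (z - a) * s) by field.
    lra.
  - apply Rmult_le_reg_l with (r := 2 * s); [lra|].
    replace (2 * s * ((s + (2 * z - (a + g))) / 2)) with (s * s + 2 * (z - a) * s + (a - g) * s) by field.
    lra.
Qed.

End Geo.


Lemma Rpow_m32 u : 0 < u -> Rpower u (-(3/2)) = /(u * sqrt u).
Proof.
  intro Hu. rewrite Rpower_Ropp. f_equal.
  replace (3/2) with (1 + /2) by field.
  rewrite Rpower_plus, Rpower_1 by lra. rewrite Rpower_sqrt by lra. reflexivity.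
Qed.

Lemma inv32_decr u v : 0 < u <= v -> /(v * sqrt v) <= /(u * sqrt u).
Proof.
  intro H. assert (0 < sqrt u) by (apply sqrt_lt_R0; lra).
  assert (sqrt u <= sqrt v) by (apply sqrt_le_1_alt; lra).
  apply Rinv_le_contravar. apply Rmult_lt_0_compat; lra.
  apply Rmult_le_compat; lra.
Qed.

Lemma inv32_half W : 0 < W -> /((W*W/2) * sqrt (W*W/2)) = 2 * sqrt 2 / W^3.
Proof.
  intro HW. rewrite sqrt_div_alt by lra. rewrite sqrt_square by lra.
  assert (0 < sqrt 2) by (apply sqrt_lt_R0; lra).
  field. split; lra.
Qed.

Lemma Kf_derive c w : 0 < c < w -> is_derive (Kf c) w (2 / (w * w * (w * w - c * c))).
Proof.
  intro H. unfold Kf. auto_derive.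
  - repeat split; try nz. apply Rdiv_lt_0_compat; lra.
  - field. repeat split; try nz.
Qed.

Section Integrand.
Set Default Proof Using "All".
Variables x y z : R.
Hypothesis Hx : 0 <= x.
Hypothesis Hy : 0 <= y.
Hypothesis Hxy : 0 < x + y.
Hypothesis Hz : 0 < z.

Lemma W_sq c t : 0 <= t -> Wf x y c t * Wf x y c t = sig x y t + c * c.
Proof.
  intro Ht. unfold Wf. apply sqrt_sqrt.
  pose proof (sig_ge x y Hx Hy Hxy t Ht). pose proof (g_nn x y Hx Hy Hxy).
  assert (0 <= c * c) by (apply Rle_0_sqr). lra.
Qed.

Lemma sig_pos t : 0 <= t -> 0 < sig x y t.
Proof.
  intro Ht. pose proof (sig_ge x y Hx Hy Hxy t Ht). pose proof (g_nn x y Hx Hy Hxy). lra.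
Qed.

Lemma W_pos c t : 0 <= t -> 0 < Wf x y c t.
Proof.
  intro Ht. unfold Wf. apply sqrt_lt_R0. pose proof (sig_pos t Ht).
  assert (0 <= c * c) by (apply Rle_0_sqr). lra.
Qed.

Lemma f_eq t : 0 < t -> RD_integrand x y z t = / Sf x y t * /((t+z) * sqrt (t+z)).
Proof.
  intro Ht. unfold RD_integrand, Sf. rewrite Rpow_m32 by lra. reflexivity.
Qed.

Lemma f_bounds c1 c2 t : 0 < t ->
  c1 * c1 = 2*z - ((x+y)/2 + sqrt (x*y)) -> c2 * c2 = 2*z - 2*((x+y)/2) ->
  hf x y c1 t <= RD_integrand x y z t <= hf x y c2 t.
Proof.
  intros Ht H1 H2.
  pose proof (tz_bounds x y Hx Hy Hxy t z (Rlt_le _ _ Ht)) as [B1 B2].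
  pose proof (W_sq c1 t (Rlt_le _ _ Ht)) as E1.
  pose proof (W_sq c2 t (Rlt_le _ _ Ht)) as E2.
  pose proof (W_pos c1 t (Rlt_le _ _ Ht)) as P1.
  pose proof (W_pos c2 t (Rlt_le _ _ Ht)) as P2.
  pose proof (Sf_pos x y Hx Hy Hxy t Ht) as PS.
  rewrite f_eq by exact Ht. unfold hf.
  assert (HS : 0 < / Sf x y t) by (apply Rinv_0_lt_compat; lra).
  replace (2 * sqrt 2 / (Sf x y t * Wf x y c1 t ^ 3)) with
    (/ Sf x y t * (2 * sqrt 2 / Wf x y c1 t ^ 3)) by (field; split; lra).
  replace (2 * sqrt 2 / (Sf x y t * Wf x y c2 t ^ 3)) with
    (/ Sf x y t * (2 * sqrt 2 / Wf x y c2 t ^ 3)) by (field; split; lra).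
  rewrite <- !inv32_half by lra.
  split; apply Rmult_le_compat_l; try lra; apply inv32_decr.
  - split; [lra|]. rewrite E1, H1. lra.
  - split.
    + rewrite E2, H2. pose proof (sig_pos t (Rlt_le _ _ Ht)). 
      assert (2 * z - 2 * ((x+y)/2) > 0 -> True) by auto.
      assert (0 < Wf x y c2 t * Wf x y c2 t) by (apply Rmult_lt_0_compat; lra). lra.
    + rewrite E2, H2. lra.
Qed.

Lemma f_nonneg t : 0 < t -> 0 <= RD_integrand x y z t.
Proof.
  intro Ht. unfold RD_integrand. apply Rmult_le_pos.
  - left. apply Rinv_0_lt_compat. apply (Sf_pos x y Hx Hy Hxy t Ht).
  - unfold Rpower. left. apply exp_pos.
Qed.

Lemma f_cont t : 0 < t -> continuous (RD_integrand x y z) t.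
Proof.
  intro Ht. apply (ex_derive_continuous (K:=R_AbsRing) (V:=R_NormedModule)).
  assert (0 < sqrt ((t + x) * (t + y))) by (apply sqrt_lt_R0; nra).
  unfold RD_integrand, Rpower. auto_derive. side.
Qed.

Lemma sig_derive t : 0 < t -> is_derive (sig x y) t (sig x y t / Sf x y t).
Proof.
  intro Ht. pose proof (Sf_pos x y Hx Hy Hxy t Ht). unfold sig, Sf in *. auto_derive.
  - nra.
  - field. lra.
Qed.

Lemma W_derive c t : 0 < t -> is_derive (Wf x y c) t (sig x y t / Sf x y t / (2 * Wf x y c t)).
Proof.
  intro Ht. unfold Wf.
  pose proof (W_pos c t (Rlt_le _ _ Ht)) as HW. unfold Wf in HW.
  pose proof (sig_pos t (Rlt_le _ _ Ht)).
  assert (0 <= c * c) by apply Rle_0_sqr.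
  assert (Hc : is_derive (fun u => sqrt (sig x y u + c * c)) t
     (scal (sig x y t / Sf x y t) (/ (2 * sqrt (sig x y t + c * c))))).
  { apply (is_derive_comp (K:=R_AbsRing) (V:=R_NormedModule) sqrt (fun u => sig x y u + c * c) t).
    - auto_derive. lra. field. lra.
    - pose proof (Sf_pos x y Hx Hy Hxy t Ht) as HS. unfold sig, Sf in *. auto_derive.
      apply Rmult_lt_0_compat; lra. field. lra. }
  unfold scal in Hc; simpl in Hc.
  pose proof (Sf_pos x y Hx Hy Hxy t Ht) as HS.
  replace (sig x y t / Sf x y t / (2 * sqrt (sig x y t + c * c))) with
    (sig x y t / Sf x y t * / (2 * sqrt (sig x y t + c * c))) by (field; lra).
  exact Hc.
Qed.

Lemma H_derive c t : 0 < c -> 0 < t -> is_derive (Hf x y c) t (hf x y c t).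
Proof.
  intros Hc Ht.
  pose proof (W_pos c t (Rlt_le _ _ Ht)) as HW.
  pose proof (W_sq c t (Rlt_le _ _ Ht)) as E.
  pose proof (sig_pos t (Rlt_le _ _ Ht)) as Hs.
  pose proof (Sf_pos x y Hx Hy Hxy t Ht) as HS.
  assert (Hcw : c < Wf x y c t).
  { apply Rnot_le_lt; intro Hle. assert (Wf x y c t * Wf x y c t <= c * c) by
      (apply Rmult_le_compat; lra). lra. }
  unfold Hf.
  apply is_derive_ext with (f := fun t => 2 * sqrt 2 * Kf c (Wf x y c t)); [reflexivity|].
  replace (hf x y c t) with (2 * sqrt 2 * scal (sig x y t / Sf x y t / (2 * Wf x y c t))
        (2 / (Wf x y c t * Wf x y c t * (Wf x y c t * Wf x y c t - c * c)))).
  - apply is_derive_scal.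
    apply (is_derive_comp (K:=R_AbsRing) (V:=R_NormedModule) (Kf c) (Wf x y c) t).
    + apply Kf_derive; lra.
    + apply W_derive; lra.
  - unfold scal; simpl; unfold mult; simpl. unfold hf.
    replace (Wf x y c t * Wf x y c t - c * c) with (sig x y t) by lra.
    field. repeat split; lra.
Qed.

Lemma h_cont c t : 0 < c -> 0 < t -> continuous (hf x y c) t.
Proof.
  intros Hc Ht. apply (ex_derive_continuous (K:=R_AbsRing) (V:=R_NormedModule)).
  pose proof (W_pos c t (Rlt_le _ _ Ht)) as HW.
  pose proof (Sf_pos x y Hx Hy Hxy t Ht) as HS.
  pose proof (sig_pos t (Rlt_le _ _ Ht)) as Hs.
  assert (0 <= c * c) by apply Rle_0_sqr.
  unfold hf, Wf, sig, Sf in *. auto_derive. side.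
Qed.

End Integrand.

Lemma ball_R (l e v : R) : ball l e v <-> Rabs (v - l) < e.
Proof. unfold ball; simpl; unfold AbsRing_ball; simpl; unfold abs, minus, plus, opp; simpl. reflexivity. Qed.

Section GenSup.
Variable f : R -> R.
Hypothesis fc : forall t, 0 < t -> continuous f t.
Hypothesis fpos : forall t, 0 < t -> 0 <= f t.

Lemma exRI u v : 0 < u -> u <= v -> ex_RInt f u v.
Proof.
  intros Hu Huv. apply (ex_RInt_continuous (V:=R_CompleteNormedModule)). intros t Ht.
  rewrite Rmin_left in Ht by lra. apply fc. lra.
Qed.

Lemma RI_mono u0 v0 u v : 0 < u -> u <= u0 -> u0 <= v0 -> v0 <= v ->
  RInt f u0 v0 <= RInt f u v.
Proof.
  intros Hu H1 H2 H3.
  rewrite <- (RInt_Chasles f u u0 v) by (apply exRI; lra).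
  rewrite <- (RInt_Chasles f u0 v0 v) by (apply exRI; lra).
  assert (0 <= RInt f u u0) by (apply RInt_ge_0; [lra| apply exRI; lra| intros; apply fpos; lra]).
  assert (0 <= RInt f v0 v) by (apply RInt_ge_0; [lra| apply exRI; lra| intros; apply fpos; lra]).
  unfold plus; simpl. lra.
Qed.

Lemma gen_sup (B : R) :
  (forall u v, 0 < u -> u < v -> RInt f u v <= B) ->
  exists l, is_RInt_gen f (at_right 0) (Rbar_locally p_infty) l /\
    (forall u v, 0 < u -> u < v -> RInt f u v <= l) /\ l <= B.
Proof.
  intros HB.
  set (E := fun r => exists u v, 0 < u /\ u < v /\ r = RInt f u v).
  assert (Hb : bound E).
  { exists B. intros r [u [v [Hu [Huv ->]]]]. apply HB; lra. }
  assert (Hne : exists r, E r) by (exists (RInt f 1 2); exists 1, 2; repeat split; lra).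
  destruct (completeness E Hb Hne) as [l [Hub Hlub]].
  exists l. split; [|split].
  - intros P [eps Heps].
    assert (Hex : exists u0 v0, 0 < u0 /\ u0 < v0 /\ l - eps < RInt f u0 v0).
    { destruct (Classical_Prop.classic (exists u0 v0, 0 < u0 /\ u0 < v0 /\ l - eps < RInt f u0 v0)) as [H|Hno]; [exact H|].
      exfalso.
      assert (l <= l - eps).
      { apply Hlub. intros r [u [v [Hu [Huv ->]]]].
        destruct (Rle_or_lt (RInt f u v) (l - eps)) as [H|H]; [exact H|].
        exfalso. apply Hno. exists u, v. repeat split; lra. }
      pose proof (cond_pos eps). lra. }
    destruct Hex as [u0 [v0 [Hu0 [Huv0 Hlt]]]].
    unfold filtermapi.
    apply Filter_prod with (Q := fun u => 0 < u < u0) (R := fun v => v0 < v).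
    + unfold at_right, within, locally. exists (mkposreal u0 Hu0).
      intros t Ht Ht0. apply ball_R in Ht. change (Rabs (t - 0) < u0) in Ht. unfold Rminus in Ht. rewrite Ropp_0, Rplus_0_r in Ht.
      apply Rabs_def2 in Ht. lra.
    + exists v0. auto.
    + intros u v [Hu Hu'] Hv. simpl. exists (RInt f u v). split.
      * apply (RInt_correct (V:=R_CompleteNormedModule)). apply exRI; lra.
      * apply Heps. apply ball_R.
        assert (RInt f u v <= l) by (apply Hub; exists u, v; repeat split; lra).
        assert (RInt f u0 v0 <= RInt f u v) by (apply RI_mono; lra).
        apply Rabs_def1; lra.
  - intros u v Hu Huv. apply Hub. exists u, v. repeat split; lra.
  - apply Hlub. intros r [u [v [Hu [Huv ->]]]]. apply HB; lra.
Qed.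
End GenSup.

Lemma Kf_alt c w : 0 < c < w ->
  Kf c w = 2 / (c * c) * ((ln (1 - c / w) - ln (1 + c / w)) / (2 * c) + / w).
Proof.
  intro H. unfold Kf. f_equal. f_equal. f_equal.
  assert (0 < c / w < 1).
  { split. apply Rdiv_lt_0_compat; lra. apply (Rmult_lt_reg_r w); [lra|].
    field_simplify; lra. }
  rewrite <- ln_div by lra. f_equal. field. lra.
Qed.

Lemma Kf_neg c w : 0 < c < w -> Kf c w < 0.
Proof.
  intro H. rewrite Kf_alt by lra.
  assert (Hr : 0 < c / w < 1).
  { split. apply Rdiv_lt_0_compat; lra. apply (Rmult_lt_reg_r w); [lra|].
    field_simplify; lra. }
  pose proof (ln_ineq4 (c / w) Hr).
  assert (0 < 2 / (c * c)) by (apply Rdiv_lt_0_compat; nra).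
  replace 0 with (2 / (c * c) * 0) by ring.
  apply Rmult_lt_compat_l; [lra|].
  assert ((ln (1 - c / w) - ln (1 + c / w)) / (2 * c) < - 2 * (c / w) / (2 * c)).
  { unfold Rdiv at 1 3. apply Rmult_lt_compat_r. apply Rinv_0_lt_compat; lra. lra. }
  replace (- 2 * (c / w) / (2 * c)) with (- / w) in H2 by (field; lra). lra.
Qed.

Lemma Kf_lower c w : 0 < c < w -> - / (c * c * (w - c)) <= Kf c w.
Proof.
  intro H. rewrite Kf_alt by lra.
  assert (Hr : 0 < c / w < 1).
  { split. apply Rdiv_lt_0_compat; lra. apply (Rmult_lt_reg_r w); [lra|].
    field_simplify; lra. }
  set (r := c / w) in *.
  assert (H1 : - ln (1 - r) <= r / (1 - r)).
  { rewrite <- ln_Rinv by lra. pose proof (ln_le_xm1 (/ (1 - r))).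
    replace (r / (1 - r)) with (/ (1 - r) - 1) by (field; lra). apply H0.
    apply Rinv_0_lt_compat; lra. }
  assert (H2 : ln (1 + r) <= r).
  { pose proof (ln_le_xm1 (1 + r)). lra. }
  assert (H3 : - r / (1 - r) - r <= ln (1 - r) - ln (1 + r)) by (unfold Rdiv in *; lra).
  assert (0 < 2 / (c * c)) by (apply Rdiv_lt_0_compat; nra).
  assert (H4 : (- r / (1 - r) - r) / (2 * c) <= (ln (1 - r) - ln (1 + r)) / (2 * c)).
  { unfold Rdiv at 1 3. apply Rmult_le_compat_r. left; apply Rinv_0_lt_compat; lra. lra. }
  assert (E1 : (- r / (1 - r) - r) / (2 * c) = - / (2 * (w - c)) - / (2 * w)).
  { unfold r. field. repeat split; lra. }
  rewrite E1 in H4.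
  assert (H5 : - / (2 * (w - c)) <= (ln (1 - r) - ln (1 + r)) / (2 * c) + / w).
  { assert (/ (2 * w) <= / w).
    { apply Rinv_le_contravar; lra. }
    assert (0 < / (2 * w)) by (apply Rinv_0_lt_compat; lra). lra. }
  replace (- / (c * c * (w - c))) with (2 / (c * c) * (- / (2 * (w - c)))) by (field; split; lra).
  apply Rmult_le_compat_l; lra.
Qed.

Lemma Kf_mono c w1 w2 : 0 < c < w1 -> w1 <= w2 -> Kf c w1 <= Kf c w2.
Proof.
  intros H1 H2.
  apply (mono_le (Kf c) (fun w => 2 / (w * w * (w * w - c * c)))); [lra| |].
  - intros t Ht. apply Kf_derive; lra.
  - intros t Ht. left. apply Rdiv_lt_0_compat; [lra|].
    apply Rmult_lt_0_compat; [nra|]. nra.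
Qed.

Lemma cR_plus (f g : R -> R) t : continuous f t -> continuous g t -> continuous (fun u => f u + g u) t.
Proof. intros. apply (continuous_plus f g); auto. Qed.
Lemma cR_mult (f g : R -> R) t : continuous f t -> continuous g t -> continuous (fun u => f u * g u) t.
Proof. intros. apply (continuous_mult f g); auto. Qed.

Lemma W_cont0 x y c : continuous (Wf x y c) 0.
Proof.
  unfold Wf, sig, Sf. apply continuous_sqrt_comp.
  apply cR_plus; [|apply continuous_const].
  apply cR_plus; [apply cR_plus; [apply continuous_id|apply continuous_const]|].
  apply continuous_sqrt_comp.
  apply cR_mult; apply cR_plus; try apply continuous_id; apply continuous_const.
Qed.

Section Main.
Set Default Proof Using "All".
Variables x y z : R.
Hypothesis Hx : 0 <= x.
Hypothesis Hy : 0 <= y.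
Hypothesis Hxy : 0 < x + y.
Hypothesis Hz : 0 < z.
Hypothesis Haz : (x + y) / 2 < z.

Lemma c_lt_W c t : 0 < c -> 0 <= t -> c < Wf x y c t.
Proof.
  intros Hc Ht.
  pose proof (W_pos x y z Hx Hy Hxy Hz c t Ht) as HW.
  pose proof (W_sq x y z Hx Hy Hxy Hz c t Ht) as E.
  pose proof (sig_pos x y z Hx Hy Hxy Hz t Ht) as Hs.
  apply Rnot_le_lt; intro Hle. assert (Wf x y c t * Wf x y c t <= c * c) by
      (apply Rmult_le_compat; lra). lra.
Qed.

Lemma W_mono c t : 0 <= t -> Wf x y c 0 <= Wf x y c t.
Proof.
  intro Ht. unfold Wf. apply sqrt_le_1_alt.
  rewrite (sig0 x y Hx Hy Hxy). pose proof (sig_ge x y Hx Hy Hxy t Ht). lra.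
Qed.

Lemma int_cmp c1 c2 u v : 0 < c1 -> 0 < c2 ->
  c1 * c1 = 2*z - ((x+y)/2 + sqrt (x*y)) -> c2 * c2 = 2*z - 2*((x+y)/2) ->
  0 < u -> u < v ->
  Hf x y c1 v - Hf x y c1 u <= RInt (RD_integrand x y z) u v <= Hf x y c2 v - Hf x y c2 u.
Proof.
  intros Hc1 Hc2 E1 E2 Hu Huv.
  assert (HI : forall c, 0 < c -> RInt (hf x y c) u v = Hf x y c v - Hf x y c u).
  { intros c Hc. apply is_RInt_unique.
    apply (is_RInt_derive (V:=R_CompleteNormedModule) (Hf x y c) (hf x y c)).
    - intros t Ht. rewrite Rmin_left in Ht by lra. apply (H_derive x y z Hx Hy Hxy Hz); lra.
    - intros t Ht. rewrite Rmin_left in Ht by lra. apply (h_cont x y z Hx Hy Hxy Hz); lra. }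
  assert (Hexh : forall c, 0 < c -> ex_RInt (hf x y c) u v).
  { intros c Hc. apply (ex_RInt_continuous (V:=R_CompleteNormedModule)). intros t Ht.
    rewrite Rmin_left in Ht by lra. apply (h_cont x y z Hx Hy Hxy Hz); lra. }
  assert (Hexf : ex_RInt (RD_integrand x y z) u v).
  { apply (ex_RInt_continuous (V:=R_CompleteNormedModule)). intros t Ht.
    rewrite Rmin_left in Ht by lra. apply (f_cont x y z Hx Hy Hxy Hz); lra. }
  split.
  - rewrite <- HI by lra. apply RInt_le; auto; try lra.
    intros t Ht. apply (f_bounds x y z Hx Hy Hxy Hz c1 c2 t); lra.
  - rewrite <- HI by lra. apply RInt_le; auto; try lra.
    intros t Ht. apply (f_bounds x y z Hx Hy Hxy Hz c1 c2 t); lra.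
Qed.

Lemma main_bounds c1 c2 : 0 < c1 -> 0 < c2 ->
  c1 * c1 = 2*z - ((x+y)/2 + sqrt (x*y)) -> c2 * c2 = 2*z - 2*((x+y)/2) ->
  exists l, R_D x y z = 3 / 2 * l /\ - Hf x y c1 0 <= l /\ l <= - Hf x y c2 0.
Proof.
  intros Hc1 Hc2 E1 E2.
  destruct (gen_sup (RD_integrand x y z) (f_cont x y z Hx Hy Hxy Hz)
              (f_nonneg x y z Hx Hy Hxy Hz) (- Hf x y c2 0)) as [l [Hl [Hle Hub]]].
  { intros u v Hu Huv.
    destruct (int_cmp c1 c2 u v Hc1 Hc2 E1 E2 Hu Huv) as [_ H].
    assert (Hf x y c2 v < 0).
    { unfold Hf. assert (0 < sqrt 2) by (apply sqrt_lt_R0; lra).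
      assert (Kf c2 (Wf x y c2 v) < 0) by (apply Kf_neg; split; [lra|apply c_lt_W; lra]).
      nra. }
    assert (Hf x y c2 0 <= Hf x y c2 u).
    { unfold Hf. assert (0 < sqrt 2) by (apply sqrt_lt_R0; lra).
      assert (Kf c2 (Wf x y c2 0) <= Kf c2 (Wf x y c2 u)).
      { apply Kf_mono. split; [lra|apply c_lt_W; lra]. apply W_mono; lra. }
      nra. }
    lra. }
  exists l. split; [|split; [|exact Hub]].
  - unfold R_D. f_equal. apply is_RInt_gen_unique. exact Hl.
  -
    apply Rnot_lt_le. intro Hlt.
    set (eps := - Hf x y c1 0 - l).
    assert (Heps : 0 < eps) by (unfold eps; lra).
    set (N := 2 * sqrt 2 * 3 / (c1 * c1 * eps) + 1).
    assert (HN : 0 < N).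
    { unfold N. assert (0 < sqrt 2) by (apply sqrt_lt_R0; lra).
      assert (0 < 2 * sqrt 2 * 3 / (c1 * c1 * eps)).
      { apply Rdiv_lt_0_compat. lra. apply Rmult_lt_0_compat; nra. } lra. }
    set (v := (N + c1) * (N + c1)).
    assert (Hv : 0 < v) by (unfold v; nra).
    assert (HWv : N + c1 <= Wf x y c1 v).
    { unfold Wf. rewrite <- (sqrt_square (N + c1)) by lra. apply sqrt_le_1_alt.
      pose proof (sig_ge x y Hx Hy Hxy v (Rlt_le _ _ Hv)). pose proof (g_nn x y Hx Hy Hxy).
      unfold v in *. assert (0 <= c1 * c1) by nra. lra. }
    assert (HHv : - eps / 3 <= Hf x y c1 v).
    { unfold Hf.
      pose proof (Kf_lower c1 (Wf x y c1 v)) as KL.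
      assert (0 < sqrt 2) by (apply sqrt_lt_R0; lra).
      assert (Hw : - / (c1 * c1 * N) <= Kf c1 (Wf x y c1 v)).
      { eapply Rle_trans; [|apply KL; lra].
        apply Ropp_le_contravar. apply Rinv_le_contravar.
        apply Rmult_lt_0_compat; nra. apply Rmult_le_compat_l; nra. }
      assert (E : 2 * sqrt 2 * (- / (c1 * c1 * N)) >= - eps / 3).
      { assert (2 * sqrt 2 * / (c1 * c1 * N) <= eps / 3).
        { unfold N.
          set (q := 2 * sqrt 2 * 3 / (c1 * c1 * eps)).
          assert (Hq : 0 < q).
          { unfold q. apply Rdiv_lt_0_compat. lra. apply Rmult_lt_0_compat; nra. }
          assert (Hqe : q * (c1 * c1 * eps) = 2 * sqrt 2 * 3) by (unfold q; field; split; lra).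
          apply (Rmult_le_reg_r (c1 * c1 * (q + 1))). apply Rmult_lt_0_compat; nra.
          replace (2 * sqrt 2 * / (c1 * c1 * (q + 1)) * (c1 * c1 * (q + 1))) with (2 * sqrt 2)
            by (field; split; lra).
          nra. }
        lra. }
      assert (2 * sqrt 2 * (- / (c1 * c1 * N)) <= 2 * sqrt 2 * Kf c1 (Wf x y c1 v))
        by (apply Rmult_le_compat_l; lra).
      lra. }
    assert (Hcont : continuous (Hf x y c1) 0).
    { unfold Hf.
      apply (cR_mult (fun _ => 2 * sqrt 2) (fun t => Kf c1 (Wf x y c1 t))).
      apply continuous_const.
      apply (continuous_comp (Wf x y c1) (Kf c1)). apply W_cont0.
      apply (ex_derive_continuous (K:=R_AbsRing) (V:=R_NormedModule)).
      eexists. apply Kf_derive. split; [lra|]. apply c_lt_W; lra. }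
    apply filterlim_locally with (eps := mkposreal (eps/3) ltac:(lra)) in Hcont.
    destruct Hcont as [d Hd].
    set (u := Rmin (d / 2) (v / 2)).
    assert (Hu : 0 < u).
    { unfold u. apply Rmin_pos. pose proof (cond_pos d). lra. lra. }
    assert (Huv : u < v).
    { unfold u. pose proof (Rmin_r (d/2) (v/2)). lra. }
    assert (Hud : Rabs (u - 0) < d).
    { unfold Rminus. rewrite Ropp_0, Rplus_0_r. rewrite Rabs_pos_eq by lra.
      pose proof (Rmin_l (d/2) (v/2)). pose proof (cond_pos d). unfold u. lra. }
    specialize (Hd u). rewrite ball_R in Hd. specialize (Hd Hud).
    apply Rabs_def2 in Hd. simpl in Hd.
    destruct (int_cmp c1 c2 u v Hc1 Hc2 E1 E2 Hu Huv) as [H _].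
    pose proof (Hle u v Hu Huv).
    unfold eps in *. unfold minus, plus, opp in Hd; simpl in Hd. lra.
Qed.

End Main.


Lemma low_ineq s k : 0 < s < 1 -> 0 <= k <= (1 - s^2) / s^2 ->
  (- ln (1 - s) + ln (1 + s)) / s^3 - 2 / s^2 >
  2 * ln 2 + (- ln (1 - s) - ln (1 + s)) - 2 + k * (- ln (1 - s) - ln (1 + s)).
Proof.
  intros Hs Hk.
  set (al := - ln (1 - s)). set (be := ln (1 + s)).
  assert (Hab : 0 < al - be).
  { unfold al, be. assert (ln (1 - s) + ln (1 + s) < 0).
    { rewrite <- ln_mult by lra. rewrite <- ln_1. apply ln_increasing; nra. }
    lra. }
  assert (Hal : al >= s + s^2/2 + s^3/3) by (apply ln_ineq3; lra).
  pose proof (k1_ineq s Hs) as Hk1. fold be in Hk1.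
  assert (Hs3 : 0 < s^3) by (apply pow_lt; lra).
  assert (Hnum : 0 < (1 - s) * al + (1 + s) * be - 2 * s + (2 - 2 * ln 2) * s^3).
  { assert ((1 - s) * al >= (1 - s) * (s + s^2/2 + s^3/3)) by (apply Rmult_ge_compat_l; lra).
    lra. }
  assert (E : (al + be) / s^3 - 2 / s^2 -
     (2 * ln 2 + (al - be) - 2 + k * (al - be)) =
     ((1 - s) * al + (1 + s) * be - 2 * s + (2 - 2 * ln 2) * s^3) / s^3
     + ((1 - s^2) / s^2 - k) * (al - be)) by (field; lra).
  assert (0 < ((1 - s) * al + (1 + s) * be - 2 * s + (2 - 2 * ln 2) * s^3) / s^3)
    by (apply Rdiv_lt_0_compat; lra).
  assert (0 <= ((1 - s^2) / s^2 - k) * (al - be)) by (apply Rmult_le_pos; lra).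
  replace (- ln (1 - s) + ln (1 + s)) with (al + be) by (unfold al, be; ring).
  replace (- ln (1 - s) - ln (1 + s)) with (al - be) by (unfold al, be; ring).
  lra.
Qed.

Lemma up_ineq r : 0 < r < 1 ->
  (- ln (1 - r) + ln (1 + r)) / r^3 - 2 / r^2 <
  2 * ln 2 + (- ln (1 - r) - ln (1 + r)) - 2
    + 3 * (1 - r^2) / (2 * r^2) * (- ln (1 - r) - ln (1 + r)).
Proof.
  intros Hr.
  set (al := - ln (1 - r)). set (be := ln (1 + r)).
  assert (HL : al - be <= r^2 / (1 - r^2)).
  { unfold al, be.
    assert (E : - ln (1 - r) - ln (1 + r) = ln (/ ((1 - r) * (1 + r)))).
    { rewrite ln_Rinv by nra. rewrite ln_mult by lra. ring. }
    rewrite E. pose proof (ln_le_xm1 (/ ((1 - r) * (1 + r)))).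
    replace (r^2 / (1 - r^2)) with (/ ((1 - r) * (1 + r)) - 1) by (field; nra).
    apply H. apply Rinv_0_lt_compat; nra. }
  pose proof (k2_ineq r Hr) as Hk2. fold be in Hk2.
  assert (Hr2 : r^2 < 1) by nra.
  assert (Hr3 : 0 < r^3) by (apply pow_lt; lra).
  assert (Hc : 0 <= (1 - r)^2 * (2 + r)) by (apply Rmult_le_pos; [apply pow_le; lra|lra]).
  assert (H1 : (1 - r)^2 * (2 + r) * (al - be) <= (1 - r)^2 * (2 + r) * (r^2 / (1 - r^2)))
    by (apply Rmult_le_compat_l; lra).
  replace ((1 - r)^2 * (2 + r) * (r^2 / (1 - r^2))) with ((1 - r) * (2 + r) * r^2 / (1 + r))
    in H1 by (field; split; apply Rgt_not_eq; lra).
  assert (Hnum : 0 < (4 * ln 2 - 4) * r^3 + 4 * r - 4 * be - (1 - r)^2 * (2 + r) * (al - be)) by lra.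
  assert (E : 2 * ln 2 + (al - be) - 2 + 3 * (1 - r^2) / (2 * r^2) * (al - be)
       - ((al + be) / r^3 - 2 / r^2) =
       ((4 * ln 2 - 4) * r^3 + 4 * r - 4 * be - (1 - r)^2 * (2 + r) * (al - be)) / (2 * r^3))
    by (field; lra).
  assert (0 < ((4 * ln 2 - 4) * r^3 + 4 * r - 4 * be - (1 - r)^2 * (2 + r) * (al - be)) / (2 * r^3))
    by (apply Rdiv_lt_0_compat; lra).
  replace (- ln (1 - r) + ln (1 + r)) with (al + be) by (unfold al, be; ring).
  replace (- ln (1 - r) - ln (1 + r)) with (al - be) by (unfold al, be; ring).
  lra.
Qed.

Lemma Kf_scale w s : 0 < w -> 0 < s < 1 ->
  w^3 * Kf (w * s) w = (ln (1 - s) - ln (1 + s)) / s^3 + 2 / s^2.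
Proof.
  intros Hw Hs. unfold Kf.
  replace ((w - w * s) / (w + w * s)) with ((1 - s) / (1 + s)) by (field; side).
  rewrite ln_div by lra. field. side.
Qed.

Lemma J_mono c a0 q1 q2 : 0 < c -> 0 < a0 -> a0 <= q1 -> q1 <= q2 ->
  - Kf c (sqrt (q1 + c * c)) + / ((a0 + c * c) * sqrt (a0 + c * c)) * ln q1 <=
  - Kf c (sqrt (q2 + c * c)) + / ((a0 + c * c) * sqrt (a0 + c * c)) * ln q2.
Proof.
  intros Hc Ha H1 H2.
  set (M := / ((a0 + c * c) * sqrt (a0 + c * c))).
  apply (mono_le (fun q => - Kf c (sqrt (q + c * c)) + M * ln q)
                 (fun q => - / (q * ((q + c * c) * sqrt (q + c * c))) + M / q)); [lra| |].
  - intros q Hq. assert (Hq0 : 0 < q) by lra.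
    assert (Hw : 0 < sqrt (q + c * c)) by (apply sqrt_lt_R0; nra).
    assert (Hcw : c < sqrt (q + c * c)).
    { rewrite <- (sqrt_square c) at 1 by lra. apply sqrt_lt_1_alt. nra. }
    assert (Hww : sqrt (q + c * c) * sqrt (q + c * c) = q + c * c) by (apply sqrt_sqrt; nra).
    unfold Kf. auto_derive.
    + repeat split; try nz; try (apply Rdiv_lt_0_compat; lra); try nra.
    + set (w := sqrt (q + c * c)) in *. clearbody w.
      assert (Hq' : q = w * w - c * c) by lra. subst q.
      field. repeat split; try nz.
  - intros q Hq.
    assert (Hq0 : 0 < q) by lra.
    assert (/ ((q + c * c) * sqrt (q + c * c)) <= M).
    { unfold M. apply inv32_decr. nra. }
    replace (- / (q * ((q + c * c) * sqrt (q + c * c))) + M / q) with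
      ((M - / ((q + c * c) * sqrt (q + c * c))) / q).
    2:{ assert (0 < sqrt (q + c * c)) by (apply sqrt_lt_R0; nra). field. side. }
    apply Rdiv_le_0_compat; lra.
Qed.

Lemma XY_ineq A : 0 < A < 1/2 ->
  sqrt (/ (1 - A)) ^ 3 <= (1 + A) / (1 - 2 * A).
Proof.
  intro HA.
  set (X := sqrt (/ (1 - A))).
  assert (HX : 0 < X) by (apply sqrt_lt_R0; apply Rinv_0_lt_compat; lra).
  assert (HX2 : X * X = / (1 - A)) by (apply sqrt_sqrt; left; apply Rinv_0_lt_compat; lra).
  set (Y := (1 + A) / (1 - 2 * A)).
  assert (HY : 0 < Y) by (apply Rdiv_lt_0_compat; lra).
  assert (Hpoly : (1 - 2*A)^2 <= (1 + A)^2 * (1 - A)^3).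
  { assert (0 <= A * (3 - 6*A) ) by (apply Rmult_le_pos; lra).
    assert (0 <= A * A * (2 + A - A * A)) by (apply Rmult_le_pos; nra).
    nra. }
  assert (HX6 : X^3 * X^3 <= Y * Y).
  { replace (X^3 * X^3) with ((X*X)*(X*X)*(X*X)) by ring. rewrite HX2.
    unfold Y. apply (Rmult_le_reg_r ((1 - A)^3 * (1 - 2*A)^2)).
    apply Rmult_lt_0_compat; apply pow_lt; lra.
    replace (/ (1 - A) * / (1 - A) * / (1 - A) * ((1 - A) ^ 3 * (1 - 2 * A) ^ 2)) with ((1 - 2*A)^2)
      by (field; lra).
    replace ((1 + A) / (1 - 2 * A) * ((1 + A) / (1 - 2 * A)) * ((1 - A) ^ 3 * (1 - 2 * A) ^ 2))
      with ((1 + A)^2 * (1 - A)^3) by (field; lra).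
    exact Hpoly. }
  assert (0 < X^3) by (apply pow_lt; lra).
  apply Rnot_lt_le. intro Hlt. assert (Y * Y < X^3 * X^3) by (apply Rmult_le_0_lt_compat; lra).
  lra.
Qed.


Lemma Rpow32 z : 0 < z -> Rpower z (3/2) = z * sqrt z.
Proof.
  intro Hz. replace (3/2) with (1 + /2) by field.
  rewrite Rpower_plus, Rpower_1, Rpower_sqrt by lra. reflexivity.
Qed.

Lemma omega3 z : 0 < z -> sqrt (2*z) ^ 3 = z * sqrt z * (2 * sqrt 2).
Proof.
  intro Hz. rewrite sqrt_mult by lra.
  assert (H2 : sqrt 2 * sqrt 2 = 2) by (apply sqrt_sqrt; lra).
  assert (Hz2 : sqrt z * sqrt z = z) by (apply sqrt_sqrt; lra).
  replace ((sqrt 2 * sqrt z) ^ 3) with ((sqrt 2 * sqrt 2) * (sqrt z * sqrt z) * (sqrt 2 * sqrt z)) by ring.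
  rewrite H2, Hz2. ring.
Qed.

Lemma XY2 A : 0 < A < 1/2 -> / ((1 - A) * sqrt (1 - A)) <= (1 + A) / (1 - 2 * A).
Proof.
  intro HA. pose proof (XY_ineq A HA).
  rewrite sqrt_inv in H.
  assert (0 < sqrt (1 - A)) by (apply sqrt_lt_R0; lra).
  assert (sqrt (1 - A) * sqrt (1 - A) = 1 - A) by (apply sqrt_sqrt; lra).
  assert (E : (1 - A) * sqrt (1 - A) = sqrt (1 - A) ^ 3).
  { replace (sqrt (1 - A) ^ 3) with (sqrt (1 - A) * sqrt (1 - A) * sqrt (1 - A)) by ring.
    rewrite H1. reflexivity. }
  rewrite E. replace (/ sqrt (1 - A) ^ 3) with ((/ sqrt (1 - A)) ^ 3) by (field; lra). exact H.
Qed.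

Lemma sqrt_lt1 u : 0 < u < 1 -> 0 < sqrt u < 1.
Proof.
  intro H. split. apply sqrt_lt_R0; lra.
  rewrite <- sqrt_1. apply sqrt_lt_1_alt. lra.
Qed.

Theorem mainTheorem6 (x y z : R) :
  0 <= x -> 0 <= y -> 0 < x + y -> 0 < z ->
  (x + y) / 2 < z ->
  let a := (x + y) / 2 in
  let g := sqrt (x * y) in
  exists theta : R,
    g / (1 - g / z) < theta /\ theta < 3 * a / (2 * (1 - a / z)) /\
    R_D x y z =
      3 / (2 * Rpower z (3 / 2)) *
        (ln (8 * z / (a + g)) - 2 + theta / z * ln (2 * z / (a + g))).
Proof.
  intros Hx Hy Hxy Hz Haz a g.
  assert (Hg0 : 0 <= g) by apply sqrt_pos.
  assert (Hga : g <= a) by apply (g_le_a x y Hx Hy Hxy).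
  assert (Ha : 0 < a) by (unfold a; lra).
  assert (Hza : a < z) by exact Haz.
  assert (Hp : 0 < a + g) by lra.
  set (om := sqrt (2 * z)).
  assert (Hom : 0 < om) by (apply sqrt_lt_R0; lra).
  assert (Hom2 : om * om = 2 * z) by (apply sqrt_sqrt; lra).
  set (s := sqrt (1 - (a + g) / (2 * z))).
  assert (HP : 0 < (a + g) / (2 * z) < 1).
  { split. apply Rdiv_lt_0_compat; lra. apply (Rmult_lt_reg_r (2 * z)); [lra|].
    field_simplify; lra. }
  assert (Hs : 0 < s < 1) by (apply sqrt_lt1; lra).
  assert (Hs2 : s * s = 1 - (a + g) / (2 * z)) by (apply sqrt_sqrt; lra).
  set (r := sqrt (1 - a / z)).
  assert (HA : 0 < a / z < 1).
  { split. apply Rdiv_lt_0_compat; lra. apply (Rmult_lt_reg_r z); [lra|].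
    field_simplify; lra. }
  assert (Hr : 0 < r < 1) by (apply sqrt_lt1; lra).
  assert (Hr2 : r * r = 1 - a / z) by (apply sqrt_sqrt; lra).
  set (c1 := om * s). set (c2 := om * r).
  assert (Hc1 : 0 < c1) by (unfold c1; nra).
  assert (Hc2 : 0 < c2) by (unfold c2; nra).
  assert (E1 : c1 * c1 = 2 * z - (a + g)).
  { unfold c1. replace (om * s * (om * s)) with ((om * om) * (s * s)) by ring.
    rewrite Hom2, Hs2. field. lra. }
  assert (E2 : c2 * c2 = 2 * z - 2 * a).
  { unfold c2. replace (om * r * (om * r)) with ((om * om) * (r * r)) by ring.
    rewrite Hom2, Hr2. field. lra. }
  destruct (main_bounds x y z Hx Hy Hxy Hz Haz c1 c2 Hc1 Hc2 E1 E2) as [l [HR [Hlo Hhi]]].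
  assert (HW1 : Wf x y c1 0 = om).
  { unfold Wf. rewrite (sig0 x y Hx Hy Hxy). fold a g. rewrite E1.
    unfold om. f_equal. ring. }
  assert (HW2 : Wf x y c2 0 = sqrt ((a + g) + c2 * c2)).
  { unfold Wf. rewrite (sig0 x y Hx Hy Hxy). reflexivity. }
  set (zz := z * sqrt z).
  assert (Hzz : 0 < zz) by (unfold zz; apply Rmult_lt_0_compat; [lra| apply sqrt_lt_R0; lra]).
  assert (Hom3 : om ^ 3 = zz * (2 * sqrt 2)) by (apply omega3; lra).
  set (Lp := ln (2 * z / (a + g))).
  assert (HLp : 0 < Lp).
  { unfold Lp. rewrite <- ln_1. apply ln_increasing; [lra|].
    apply (Rmult_lt_reg_r (a + g)); [lra|]. field_simplify; lra. }
  assert (H8 : ln (8 * z / (a + g)) = 2 * ln 2 + Lp).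
  { unfold Lp. replace (8 * z / (a + g)) with ((2 * 2) * (2 * z / (a + g))) by (field; lra).
    rewrite ln_mult, ln_mult by (try apply Rdiv_lt_0_compat; lra). ring. }
  assert (LOW : zz * l > ln (8 * z / (a + g)) - 2 + g / (z - g) * Lp).
  { assert (Hk : zz * l >= - (om ^ 3 * Kf c1 om)).
    { rewrite Hom3. unfold Hf in Hlo. rewrite HW1 in Hlo.
      assert (zz * (- (2 * sqrt 2 * Kf c1 om)) <= zz * l) by (apply Rmult_le_compat_l; lra).
      lra. }
    unfold c1 in Hk. rewrite Kf_scale in Hk by lra.
    assert (HLs : Lp = - ln (1 - s) - ln (1 + s)).
    { unfold Lp. replace (2 * z / (a + g)) with (/ ((1 - s) * (1 + s))).
      rewrite ln_Rinv, ln_mult by nra. ring.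
      replace ((1 - s) * (1 + s)) with (1 - s * s) by ring. rewrite Hs2. field. lra. }
    assert (Hkap : 0 <= g / (z - g) <= (1 - s^2) / s^2).
    { split. apply Rdiv_le_0_compat; lra.
      replace (s^2) with (s * s) by ring. rewrite Hs2.
      replace ((1 - (1 - (a + g) / (2 * z))) / (1 - (a + g) / (2 * z))) with
        ((a + g) / (2 * z - (a + g))) by (field; lra).
      apply (Rmult_le_reg_r ((z - g) * (2 * z - (a + g)))). apply Rmult_lt_0_compat; lra.
      replace (g / (z - g) * ((z - g) * (2 * z - (a + g)))) with (g * (2 * z - (a + g))) by (field; lra).
      replace ((a + g) / (2 * z - (a + g)) * ((z - g) * (2 * z - (a + g)))) with ((a + g) * (z - g))
        by (field; lra).
      nra. }
    pose proof (low_ineq s (g / (z - g)) Hs Hkap) as HL.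
    rewrite <- HLs in HL. rewrite H8.
    replace (- ((ln (1 - s) - ln (1 + s)) / s ^ 3 + 2 / s ^ 2)) with
      ((- ln (1 - s) + ln (1 + s)) / s ^ 3 - 2 / s ^ 2) in Hk by (field; lra).
    lra. }
  set (kh := 3 * a / (2 * (z - a))).
  assert (UP : zz * l < ln (8 * z / (a + g)) - 2 + kh * Lp).
  { assert (Hk : zz * l <= - (om ^ 3 * Kf c2 (sqrt ((a + g) + c2 * c2)))).
    { rewrite Hom3. unfold Hf in Hhi. rewrite HW2 in Hhi.
      assert (zz * l <= zz * (- (2 * sqrt 2 * Kf c2 (sqrt ((a + g) + c2 * c2)))))
        by (apply Rmult_le_compat_l; lra).
      lra. }
    pose proof (J_mono c2 a (a + g) (2 * a) Hc2 Ha ltac:(lra) ltac:(lra)) as HJ.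
    set (M := / ((a + c2 * c2) * sqrt (a + c2 * c2))) in HJ.
    assert (HW2a : sqrt (2 * a + c2 * c2) = om) by (unfold om; rewrite E2; f_equal; ring).
    rewrite HW2a in HJ.
    assert (HKs : om ^ 3 * Kf c2 om = (ln (1 - r) - ln (1 + r)) / r ^ 3 + 2 / r ^ 2)
      by (unfold c2; apply Kf_scale; lra).
    set (De := ln (2 * a) - ln (a + g)).
    assert (HDe : 0 <= De) by (unfold De; assert (ln (a + g) <= ln (2 * a)) by (apply ln_le; lra); lra).
    assert (HA2 : 0 < a / (2 * z) < 1/2).
    { split. apply Rdiv_lt_0_compat; lra. apply (Rmult_lt_reg_r (2 * z)); [lra|].
      field_simplify; lra. }
    assert (HMY : om ^ 3 * M <= 1 + kh).
    { unfold M. rewrite E2.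
      replace (a + (2 * z - 2 * a)) with ((2 * z) * (1 - a / (2 * z))) by (field; lra).
      rewrite sqrt_mult by lra.
      fold om.
      assert (0 < sqrt (1 - a / (2 * z))) by (apply sqrt_lt_R0; lra).
      replace (om ^ 3 * / (2 * z * (1 - a / (2 * z)) * (om * sqrt (1 - a / (2 * z))))) with
        (/ ((1 - a / (2 * z)) * sqrt (1 - a / (2 * z)))).
      2:{ rewrite <- Hom2. replace (om ^ 3) with (om * om * om) by ring.
          field. split; try lra.
          rewrite Hom2. lra. }
      eapply Rle_trans. apply XY2. exact HA2.
      unfold kh. right. field. lra. }
    assert (HJ3 : - (om ^ 3 * Kf c2 (sqrt ((a + g) + c2 * c2))) <=
                  - (om ^ 3 * Kf c2 om) + om ^ 3 * M * De).
    { unfold De. assert (0 < om ^ 3) by (apply pow_lt; lra).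
      assert (om ^ 3 * (- Kf c2 (sqrt (a + g + c2 * c2)) + M * ln (a + g)) <=
              om ^ 3 * (- Kf c2 om + M * ln (2 * a))) by (apply Rmult_le_compat_l; lra).
      lra. }
    rewrite HKs in HJ3.
    assert (HMD : om ^ 3 * M * De <= (1 + kh) * De) by (apply Rmult_le_compat_r; lra).
    pose proof (up_ineq r Hr) as HU.
    assert (HLr : - ln (1 - r) - ln (1 + r) = ln (z / a)).
    { replace (z / a) with (/ ((1 - r) * (1 + r))).
      rewrite ln_Rinv, ln_mult by nra. ring.
      replace ((1 - r) * (1 + r)) with (1 - r * r) by ring. rewrite Hr2. field. lra. }
    assert (HLpd : Lp = ln (z / a) + De).
    { unfold Lp, De. replace (2 * z / (a + g)) with ((z / a) * (2 * a / (a + g))) by (field; lra).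
      rewrite ln_mult by (apply Rdiv_lt_0_compat; lra). rewrite (ln_div (2 * a) (a + g)) by lra. ring. }
    assert (Hkh : 3 * (1 - r ^ 2) / (2 * r ^ 2) = kh).
    { unfold kh. replace (r ^ 2) with (r * r) by ring. rewrite Hr2. field. split; lra. }
    rewrite HLr, Hkh in HU. rewrite H8, HLpd.
    replace (- ((ln (1 - r) - ln (1 + r)) / r ^ 3 + 2 / r ^ 2)) with
      ((- ln (1 - r) + ln (1 + r)) / r ^ 3 - 2 / r ^ 2) in HJ3 by (field; lra).
    assert (0 <= kh) by (unfold kh; apply Rdiv_le_0_compat; lra).
    nra. }
  set (X := zz * l - ln (8 * z / (a + g)) + 2).
  exists (z * (X / Lp)). split; [|split].
  - replace (g / (1 - g / z)) with (z * (g / (z - g))) by (field; lra).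
    apply Rmult_lt_compat_l; [lra|].
    apply (Rmult_lt_reg_r Lp); [lra|]. unfold X.
    replace (zz * l - ln (8 * z / (a + g)) + 2) with (zz * l - ln (8 * z / (a + g)) + 2) by ring.
    replace ((zz * l - ln (8 * z / (a + g)) + 2) / Lp * Lp) with (zz * l - ln (8 * z / (a + g)) + 2)
      by (field; lra).
    lra.
  - replace (3 * a / (2 * (1 - a / z))) with (z * kh) by (unfold kh; field; lra).
    apply Rmult_lt_compat_l; [lra|].
    apply (Rmult_lt_reg_r Lp); [lra|]. unfold X.
    replace ((zz * l - ln (8 * z / (a + g)) + 2) / Lp * Lp) with (zz * l - ln (8 * z / (a + g)) + 2)
      by (field; lra).
    lra.
  - rewrite Rpow32 by lra. fold zz. rewrite HR. fold Lp. unfold X.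
    field. repeat split; lra.
Qed.
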